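(* Let $P$ be a binary matrix that contains none of $Q_1,Q_2,Q_3,Q_4$ as an interval minor. Then (1) $P$ avoids $D_2$, or (2) $P$ avoids $\overline{D}_2$, or (3) $P$ can be covered by three lines.
   Context: Rows are numbered top to bottom, columns left to right; $(i,j)$ is the entry in row $i$, column $j$; $\mathrm{supp}$ is the set of 1-entries; $(a,b]=\{a+1,\dots,b\}$. A pattern $P\in\{0,1\}^{k\times\ell}$ is an interval minor of $M\in\{0,1\}^{m\times n}$ if there are integers $0=r_0<\dots<r_k=m$ and $0=c_0<\dots<c_\ell=n$ such that for each 1-entry $(i,j)$ of $P$ the submatrix of $M$ on rows $(r_{i-1},r_i]$ and columns $(c_{j-1},c_j]$ contains a 1-entry; otherwise $M$ avoids $P$. $Q_1,\dots,Q_4\in\{0,1\}^{3\times3}$ have supports $\{(1,2),(2,1),(3,3)\}$, $\{(1,2),(2,3),(3,1)\}$, $\{(1,1),(2,3),(3,2)\}$, $\{(1,3),(2,1),(3,2)\}$. $D_2\in\{0,1\}^{2\times 2}$ has support $\{(1,1),(2,2)\}$ and $\overline D_2$ has support $\{(1,2),(2,1)\}$. A line is a row or a column; $M$ can be covered by $t$ lines if there are $t$ lines such that every 1-entry of $M$ lies on one of them. *)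

(* Defs.v *)
From mathcomp Require Import all_boot all_algebra.
Set Implicit Arguments. Unset Strict Implicit. Unset Printing Implicit Defensive.

(* Binary matrices: 'M[bool]_(m, n); entry A i j = true means a 1-entry.
   Indices are 0-based: paper's row i is ordinal i-1. *)

(* Interval minor: integers 0 = r_0 < ... < r_k = m and 0 = c_0 < ... < c_l = n
   such that each 1-entry (i,j) of P has a 1-entry of M in rows (r_i, r_{i+1}]
   and columns (c_j, c_{j+1}] (0-based: rows x with r_i <= x < r_{i+1}). *)
Definition interval_minor (k l m n : nat) (P : 'M[bool]_(k, l)) (M : 'M[bool]_(m, n)) : Prop :=
  exists (r c : nat -> nat),
    [/\ r 0 = 0, r k = m & (forall i, i < k -> r i < r i.+1)] /\
    [/\ c 0 = 0, c l = n & (forall j, j < l -> c j < c j.+1)] /\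
        forall (i : 'I_k) (j : 'I_l), P i j ->
          exists (x : 'I_m) (y : 'I_n),
            [/\ r i <= x < r i.+1, c j <= y < c j.+1 & M x y].

Definition avoids (k l m n : nat) (P : 'M[bool]_(k, l)) (M : 'M[bool]_(m, n)) : Prop :=
  ~ interval_minor P M.

Definition pattern (k l : nat) (s : seq (nat * nat)) : 'M[bool]_(k, l) :=
  \matrix_(i < k, j < l) ((i.+1, j.+1) \in s).

Definition Q1 : 'M[bool]_(3, 3) := pattern 3 3 [:: (1,2); (2,1); (3,3)].
Definition Q2 : 'M[bool]_(3, 3) := pattern 3 3 [:: (1,2); (2,3); (3,1)].
Definition Q3 : 'M[bool]_(3, 3) := pattern 3 3 [:: (1,1); (2,3); (3,2)].
Definition Q4 : 'M[bool]_(3, 3) := pattern 3 3 [:: (1,3); (2,1); (3,2)].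
Definition D2 : 'M[bool]_(2, 2) := pattern 2 2 [:: (1,1); (2,2)].
Definition D2bar : 'M[bool]_(2, 2) := pattern 2 2 [:: (1,2); (2,1)].

Definition covered_by_lines (m n : nat) (M : 'M[bool]_(m, n)) (t : nat) : Prop :=
  exists (R : {set 'I_m}) (C : {set 'I_n}),
    #|R| + #|C| <= t /\ forall i j, M i j -> (i \in R) || (j \in C).

(* Main.v *)
Require Import Defs.
From mathcomp Require Import all_boot all_algebra.
From mathcomp Require Import zify.
From Stdlib Require Import Classical.
Set Implicit Arguments. Unset Strict Implicit. Unset Printing Implicit Defensive.

Section Hall.
Variables I J : finType.

Definition nbh (E : I -> J -> bool) (X : {set I}) : {set J} :=
  [set j | [exists i in X, E i j]].

Definition hallc (E : I -> J -> bool) (A : {set I}) :=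
  forall X : {set I}, X \subset A -> #|X| <= #|nbh E X|.

Definition matches (E : I -> J -> bool) (A : {set I}) (f : I -> option J) :=
  {in A &, injective f} /\ forall i, i \in A -> exists2 j, f i = Some j & E i j.

Lemma nbhU E (X Y : {set I}) : nbh E (X :|: Y) = nbh E X :|: nbh E Y.
Proof.
apply/setP=> j; rewrite !inE; apply/existsP/orP.
  by case=> i /andP[]; rewrite inE => /orP[] Hi Ei; [left|right]; apply/existsP; exists i; rewrite Hi.
by case=> /existsP[i /andP[Hi Ei]]; exists i; rewrite inE Hi ?orbT Ei.
Qed.

Lemma nbhS E (X Y : {set I}) : X \subset Y -> nbh E X \subset nbh E Y.
Proof.
move=> sXY; apply/subsetP=> j; rewrite !inE => /existsP[i /andP[Hi Ei]].
by apply/existsP; exists i; rewrite (subsetP sXY) ?Ei.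
Qed.

Lemma hall n : forall E (A : {set I}), #|A| <= n -> hallc E A -> exists f, matches E A f.
Proof.
elim: n => [|n IH] E A.
  rewrite leqn0 cards_eq0 => /eqP -> _; exists (fun _ => None); split.
    by move=> x y; rewrite inE.
  by move=> i; rewrite inE.
move=> cA hA.
have [A0|] := eqVneq A set0.
  exists (fun _ => None); rewrite A0; split; first by move=> x y; rewrite inE.
  by move=> i; rewrite inE.
move=> An0.
case: (boolP [exists X : {set I}, [&& X \subset A, X != set0, X != A & #|nbh E X| <= #|X|]]).
- case/existsP=> X /and4P[sXA Xn0 XnA tX].
  have pXA : X \proper A by rewrite properEneq XnA.
  have cX : #|X| <= n by have := proper_card pXA; lia.
  have [f1 [inj1 e1]] := IH E X cX (fun Y sYX => hA Y (subset_trans sYX sXA)).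
  pose E2 := fun i j => E i j && (j \notin nbh E X).
  pose A2 := A :\: X.
  have cA2 : #|A2| <= n.
    have := cardsDS sXA; rewrite /A2 => ->.
    have : 0 < #|X| by rewrite card_gt0.
    lia.
  have hA2 : hallc E2 A2.
    move=> Y sYA2.
    have sYA : Y \subset A by apply: subset_trans sYA2 (subsetDl _ _).
    have dYX : [disjoint Y & X].
      rewrite -setI_eq0; apply/eqP/setP=> i; rewrite !inE.
      apply/negbTE/negP=> /andP[iY iX].
      by have := subsetP sYA2 i iY; rewrite inE iX.
    have h1 := hA (Y :|: X) ltac:(by rewrite subUset sYA sXA).
    have : nbh E2 Y = nbh E Y :\: nbh E X.
      apply/setP=> j; rewrite /nbh !inE; apply/existsP/andP.
        by case=> i /andP[iY /andP[Eij jn]]; split; rewrite ?inE in jn => //; apply/existsP; exists i; rewrite iY.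
      case=> jn /existsP[i /andP[iY Eij]]; exists i; rewrite iY /E2 Eij.
      by rewrite inE.
    move=> ->.
    move: h1; rewrite nbhU.
    have := cardsUI Y X; have := cardsUI (nbh E Y) (nbh E X).
    have := cardsID (nbh E X) (nbh E Y).
    rewrite -setI_eq0 in dYX; rewrite (eqP dYX) cards0.
    have := subset_leq_card (subsetIr (nbh E Y) (nbh E X)).
    have := subset_leq_card (subsetIl (nbh E Y) (nbh E X)).
    lia.
  have [f2 [inj2 e2]] := IH E2 A2 cA2 hA2.
  exists (fun i => if i \in X then f1 i else f2 i); split.
  + move=> i i' iA i'A /=.
    case: ifP => iX; case: ifP => i'X.
    * exact: inj1.
    * move=> Hf; exfalso.
      have [j Hj Ej] := e1 i iX.
      have i'A2 : i' \in A2 by rewrite inE i'X i'A.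
      have [j' Hj' /andP[_ Ej']] := e2 i' i'A2.
      move: Hf; rewrite Hj Hj' => [[Ejj]]; subst j'.
      by move: Ej'; rewrite inE; case/existsP; exists i; rewrite iX.
    * move=> Hf; exfalso.
      have [j Hj Ej] := e1 i' i'X.
      have iA2 : i \in A2 by rewrite inE iX iA.
      have [j' Hj' /andP[_ Ej']] := e2 i iA2.
      move: Hf; rewrite Hj Hj' => [[Ejj]]; subst j'.
      by move: Ej'; rewrite inE; case/existsP; exists i'; rewrite i'X.
    * by apply: inj2; rewrite inE ?iX ?i'X.
  + move=> i iA /=; case: ifP => iX; first exact: e1.
    have iA2 : i \in A2 by rewrite inE iX iA.
    have [j Hj /andP[Ej _]] := e2 i iA2; by exists j.
- rewrite negb_exists => /forallP nt.
  have [i0 i0A] := set0Pn _ An0.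
  have := hA [set i0]; rewrite sub1set i0A cards1 => /(_ isT).
  rewrite card_gt0 => /set0Pn[j0]; rewrite inE => /existsP[k /andP[]].
  rewrite inE => /eqP -> Ej0; clear k.
  pose E2 := fun i j => E i j && (j != j0).
  pose A2 := A :\ i0.
  have cA2 : #|A2| <= n by move: cA; rewrite (cardsD1 i0 A) i0A /A2; lia.
  have hA2 : hallc E2 A2.
    move=> Y sYA2.
    have [->|Yn0] := eqVneq Y set0; first by rewrite cards0.
    have sYA : Y \subset A by apply: subset_trans sYA2 (subsetDl _ _).
    have YnA : Y != A.
      apply/eqP=> YA; have := subsetP sYA2 i0; rewrite YA i0A !inE eqxx /=.
      by move=> /(_ isT).
    have := nt Y; rewrite sYA Yn0 YnA /= -ltnNge => lt.
    have : nbh E Y :\ j0 \subset nbh E2 Y.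
      apply/subsetP=> j; rewrite /nbh !inE => /andP[jn /existsP[k /andP[kY Ekj]]].
      by apply/existsP; exists k; rewrite kY /E2 Ekj jn.
    move/subset_leq_card; have := cardsD1 j0 (nbh E Y).
    case: (j0 \in nbh E Y); lia.
  have [f2 [inj2 e2]] := IH E2 A2 cA2 hA2.
  exists (fun i => if i == i0 then Some j0 else f2 i); split.
  + move=> i i' iA i'A /=.
    case: eqP => ei; case: eqP => ei'.
    * by rewrite ei ei'.
    * move=> Hf; exfalso.
      have i'A2 : i' \in A2 by rewrite !inE i'A andbT; apply/eqP.
      have [j' Hj' /andP[_ nj']] := e2 i' i'A2.
      by move: Hf; rewrite Hj' => [[Ejj]]; rewrite Ejj eqxx in nj'.
    * move=> Hf; exfalso.
      have iA2 : i \in A2 by rewrite !inE iA andbT; apply/eqP.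
      have [j' Hj' /andP[_ nj']] := e2 i iA2.
      by move: Hf; rewrite Hj' => [[Ejj]]; rewrite Ejj eqxx in nj'.
    * by apply: inj2; rewrite !inE ?iA ?i'A andbT; apply/eqP.
  + move=> i iA /=; case: eqP => ei; first by exists j0 => //; rewrite ei.
    have iA2 : i \in A2 by rewrite !inE iA andbT; apply/eqP.
    have [j Hj /andP[Ej _]] := e2 i iA2; by exists j.
Qed.

End Hall.

Lemma pick4 (T : finType) (A : {set T}) : 3 < #|A| ->
  exists a b c d, [/\ a \in A, b \in A, c \in A & (d \in A)] /\
    uniq [:: a; b; c; d].
Proof.
move=> cA.
have /set0Pn[a aA] : A != set0 by rewrite -card_gt0; lia.
have cA1 : 2 < #|A :\ a| by move: cA; rewrite (cardsD1 a A) aA; lia.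
have /set0Pn[b] : A :\ a != set0 by rewrite -card_gt0; lia.
rewrite !inE => /andP[ba bA].
have cA2 : 1 < #|A :\ a :\ b| by move: cA1; rewrite (cardsD1 b (A :\ a)) !inE ba bA; lia.
have /set0Pn[c] : A :\ a :\ b != set0 by rewrite -card_gt0; lia.
rewrite !inE => /and3P[cb ca cA'].
have cA3 : 0 < #|A :\ a :\ b :\ c| by move: cA2; rewrite (cardsD1 c (A :\ a :\ b)) !inE cb ca cA'; lia.
have /set0Pn[d] : A :\ a :\ b :\ c != set0 by rewrite -card_gt0; lia.
rewrite !inE => /and4P[dc db da dA].
exists a, b, c, d; split; first by split.
by rewrite /= !inE !negb_or (eq_sym a b) (eq_sym a c) (eq_sym a d) (eq_sym b c) (eq_sym b d) (eq_sym c d) ba ca da cb db dc.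
Qed.

Section K.
Variables (m n : nat) (P : 'M[bool]_(m, n)).

Definition Em := fun (i : 'I_m) (j : 'I_n) => P i j.

Definition no4 := forall (i1 i2 i3 i4 : 'I_m) (j1 j2 j3 j4 : 'I_n),
  P i1 j1 -> P i2 j2 -> P i3 j3 -> P i4 j4 ->
  uniq [:: i1; i2; i3; i4] -> uniq [:: j1; j2; j3; j4] -> False.

Lemma konig3 : no4 -> covered_by_lines P 3.
Proof.
move=> H4.
have [m3|m4] := leqP m 3.
  exists setT, set0; split; first by rewrite cards0 cardsT card_ord addn0.
  by move=> i j _; rewrite inE.
pose dfc (X : {set 'I_m}) := #|X| - #|nbh Em X|.
have [X0 HX0] := @eq_bigmax _ dfc ltac:(by apply/card_gt0P; exists set0).
set d := dfc X0.
have dmax : forall X, dfc X <= d.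
  by move=> X; rewrite /d -HX0; apply: leq_bigmax.
have hd : d = #|X0| - #|nbh Em X0| by [].
clearbody d.
pose E' := fun (i : 'I_m) (j : ('I_n + 'I_d)%type) =>
  match j with inl j => P i j | inr _ => true end.
have hA : hallc E' setT.
  move=> X _.
  have [->|Xn0] := eqVneq X set0; first by rewrite cards0.
  have [i iX] := set0Pn _ Xn0.
  have sub : (inl @: nbh Em X) :|: (inr @: [set: 'I_d]) \subset nbh E' X.
    apply/subsetP=> j; rewrite !inE => /orP[] /imsetP[k kin ->].
      by move: kin; rewrite /nbh !inE.
    by apply/existsP; exists i; rewrite iX.
  have := subset_leq_card sub.
  rewrite cardsU.
  have -> : (inl @: nbh Em X) :&: (inr @: [set: 'I_d]) = set0.
    apply/setP=> j; rewrite !inE; apply/negbTE/negP => /andP[/imsetP[k _ ->]].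
    by case/imsetP.
  rewrite cards0 subn0 !card_imset; last first.
    - by move=> a b [].
    - by move=> a b [].
  rewrite cardsT card_ord.
  have := dmax X; rewrite /dfc leq_subLR addnC => h1 h2; exact: leq_trans h1 h2.
have [f [finj fE]] := hall (leqnn _) hA.
pose R0 := [set i | if f i is Some (inl _) then true else false].
have cR1 : #|~: R0| <= d.
  rewrite -(card_in_imset (f := f)); last first.
    by move=> a b _ _; apply: finj; rewrite inE.
  have : f @: (~: R0) \subset [set Some (inr k) | k : 'I_d].
    apply/subsetP=> x /imsetP[i]; rewrite !inE => ni ->.
    have [j fj _] := fE i (in_setT i).
    move: ni; rewrite fj; case: j fj => // k fj _.
    by apply/imsetP; exists k.
  move/subset_leq_card => h; apply: leq_trans h _.
  by apply: (leq_trans (leq_imset_card _ _)); rewrite card_ord.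
have cR0 : #|R0| <= 3.
  rewrite leqNgt; apply/negP => /pick4 [a [b [c [e [[aR bR cR eR] dist]]]]].
  have getj : forall i, i \in R0 -> exists2 j, f i = Some (inl j) & P i j.
    move=> i; rewrite inE.
    have [j fj Ej] := fE i (in_setT i).
    rewrite fj; case: j fj Ej => // j fj Ej _; by exists j.
  have [ja fa Pa] := getj a aR.
  have [jb fb Pb] := getj b bR.
  have [jc fc Pc] := getj c cR.
  have [je fe Pe] := getj e eR.
  apply: (H4 a b c e ja jb jc je Pa Pb Pc Pe dist).
  have ne : forall x y jx jy, x != y -> f x = Some (inl jx) -> f y = Some (inl jy) -> jx != jy.
    move=> x y jx jy nxy fx fy; apply/eqP => ejj; move/eqP: nxy; apply.
    by apply: finj; rewrite ?inE // fx fy ejj.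
  move: dist; rewrite /= !inE !negb_or => /and4P[/and3P[d1 d2 d3] /andP[d4 d5] d6 _].
  by rewrite (ne _ _ _ _ d1 fa fb) (ne _ _ _ _ d2 fa fc) (ne _ _ _ _ d3 fa fe) (ne _ _ _ _ d4 fb fc) (ne _ _ _ _ d5 fb fe) (ne _ _ _ _ d6 fc fe).
have cm : #|R0| + #|~: R0| = m by rewrite cardsC card_ord.
have dpos : #|nbh Em X0| < #|X0| by move: cR0 cR1 cm; rewrite hd; lia.
exists (~: X0), (nbh Em X0); split.
  have := cardsC X0; rewrite card_ord.
  move: cR0 cR1 cm dpos; rewrite hd => h1 h2 h3 h4 h5; move: #|R0| #|~: R0| #|X0| #|~: X0| #|nbh Em X0| h1 h2 h3 h4 h5 => a b c e g h1 h2 h3 h4 h5. clear -h1 h2 h3 h4 h5. lia.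
move=> i j Pij; rewrite inE; case: (boolP (i \in X0)) => //= iX.
by rewrite /nbh inE; apply/existsP; exists i; rewrite iX.
Qed.

End K.

Definition tri_ok (S : nat -> nat -> Prop) := forall x1 x2 x3 y1 y2 y3,
  S x1 y1 -> S x2 y2 -> S x3 y3 -> x1 < x2 -> x2 < x3 ->
  y1 <> y2 -> y1 <> y3 -> y2 <> y3 -> (y1 < y2 /\ y2 < y3) \/ (y3 < y2 /\ y2 < y1).

Definition inc (x1 y1 x2 y2 : nat) := (x1 < x2 /\ y1 < y2) \/ (x2 < x1 /\ y2 < y1).
Definition gen (x1 y1 x2 y2 : nat) := x1 <> x2 /\ y1 <> y2.

Lemma mono3 S : tri_ok S -> forall x1 y1 x2 y2 x3 y3,
  S x1 y1 -> S x2 y2 -> S x3 y3 ->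
  gen x1 y1 x2 y2 -> gen x1 y1 x3 y3 -> gen x2 y2 x3 y3 ->
  (inc x1 y1 x2 y2 <-> inc x2 y2 x3 y3) /\ (inc x1 y1 x2 y2 <-> inc x1 y1 x3 y3).
Proof.
move=> H x1 y1 x2 y2 x3 y3 S1 S2 S3; rewrite /gen /inc => g12 g13 g23.
have : (x1 < x2 < x3) \/ (x1 < x3 < x2) \/ (x2 < x1 < x3) \/ (x2 < x3 < x1) \/ (x3 < x1 < x2) \/ (x3 < x2 < x1) by lia.
case=> [/andP[a b]|[/andP[a b]|[/andP[a b]|[/andP[a b]|[/andP[a b]|/andP[a b]]]]]].
- have := H _ _ _ _ _ _ S1 S2 S3 a b; lia.
- have := H _ _ _ _ _ _ S1 S3 S2 a b; lia.
- have := H _ _ _ _ _ _ S2 S1 S3 a b; lia.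
- have := H _ _ _ _ _ _ S2 S3 S1 a b; lia.
- have := H _ _ _ _ _ _ S3 S1 S2 a b; lia.
- have := H _ _ _ _ _ _ S3 S2 S1 a b; lia.
Qed.

Lemma incgen x1 y1 x2 y2 : inc x1 y1 x2 y2 -> gen x1 y1 x2 y2.
Proof. rewrite /inc /gen; lia. Qed.

Lemma blockC S : tri_ok S -> forall xc yc xp yp xq yq xr yr xs ys,
  S xc yc -> S xp yp -> S xq yq -> S xr yr -> S xs ys ->
  inc xp yp xq yq -> inc xp yp xr yr -> inc xp yp xs ys ->
  inc xq yq xr yr -> inc xq yq xs ys -> inc xr yr xs ys ->
  gen xc yc xp yp -> inc xc yc xp yp.
Proof.
move=> H xc yc xp yp xq yq xr yr xs ys SC Sp Sq Sr Ss ipq ipr ips iqr iqs irs gp.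
have [gq|ngq] : gen xc yc xq yq \/ ~ gen xc yc xq yq by rewrite /gen; lia.
  have [h _] := mono3 H SC Sp Sq gp gq (incgen ipq).
  by move: h ipq; rewrite /inc; tauto.
have [gr|ngr] : gen xc yc xr yr \/ ~ gen xc yc xr yr by rewrite /gen; lia.
  have [h _] := mono3 H SC Sp Sr gp gr (incgen ipr).
  by move: h ipr; rewrite /inc; tauto.
have [gs|ngs] : gen xc yc xs ys \/ ~ gen xc yc xs ys by rewrite /gen; lia.
  have [h _] := mono3 H SC Sp Ss gp gs (incgen ips).
  by move: h ips; rewrite /inc; tauto.
move: ngq ngr ngs iqr iqs irs; rewrite /gen /inc; lia.
Qed.

Lemma incsym x1 y1 x2 y2 : inc x1 y1 x2 y2 -> inc x2 y2 x1 y1.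
Proof. rewrite /inc; lia. Qed.

Lemma notboth S : tri_ok S -> forall xc yc xd yd xp yp,
  S xc yc -> S xd yd -> S xp yp -> xc < xd -> yd < yc ->
  (gen xc yc xp yp -> inc xc yc xp yp) -> (gen xd yd xp yp -> inc xd yd xp yp) ->
  ~ (gen xc yc xp yp /\ gen xd yd xp yp).
Proof.
move=> H xc yc xd yd xp yp SC SD Sp cd dc hC hD [gC gD].
have gCD : gen xc yc xd yd by rewrite /gen; lia.
have [h _] := mono3 H SC SD Sp gCD gC gD.
move: h (hC gC) (hD gD) cd dc; rewrite /inc; lia.
Qed.

Lemma EMg a b c d : gen a b c d \/ ~ gen a b c d.
Proof. rewrite /gen; lia. Qed.

Lemma no4s S : tri_ok S -> forall xc yc xd yd x1 y1 x2 y2 x3 y3 x4 y4,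
  S xc yc -> S xd yd -> xc < xd -> yd < yc ->
  S x1 y1 -> S x2 y2 -> S x3 y3 -> S x4 y4 ->
  x1 < x2 -> x2 < x3 -> x3 < x4 -> y1 < y2 -> y2 < y3 -> y3 < y4 -> False.
Proof.
move=> H xc yc xd yd x1 y1 x2 y2 x3 y3 x4 y4 SC SD cd dc S1 S2 S3 S4 a1 a2 a3 b1 b2 b3.
have i12 : inc x1 y1 x2 y2 by rewrite /inc; lia.
have i13 : inc x1 y1 x3 y3 by rewrite /inc; lia.
have i14 : inc x1 y1 x4 y4 by rewrite /inc; lia.
have i23 : inc x2 y2 x3 y3 by rewrite /inc; lia.
have i24 : inc x2 y2 x4 y4 by rewrite /inc; lia.
have i34 : inc x3 y3 x4 y4 by rewrite /inc; lia.
have i21 := incsym i12; have i31 := incsym i13; have i41 := incsym i14.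
have i32 := incsym i23; have i42 := incsym i24; have i43 := incsym i34.
have C1 := blockC H SC S1 S2 S3 S4 i12 i13 i14 i23 i24 i34.
have C2 := blockC H SC S2 S1 S3 S4 i21 i23 i24 i13 i14 i34.
have C3 := blockC H SC S3 S1 S2 S4 i31 i32 i34 i12 i14 i24.
have C4 := blockC H SC S4 S1 S2 S3 i41 i42 i43 i12 i13 i23.
have D1 := blockC H SD S1 S2 S3 S4 i12 i13 i14 i23 i24 i34.
have D2 := blockC H SD S2 S1 S3 S4 i21 i23 i24 i13 i14 i34.
have D3 := blockC H SD S3 S1 S2 S4 i31 i32 i34 i12 i14 i24.
have D4 := blockC H SD S4 S1 S2 S3 i41 i42 i43 i12 i13 i23.
have N1 := notboth H SC SD S1 cd dc C1 D1.
have N2 := notboth H SC SD S2 cd dc C2 D2.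
have N3 := notboth H SC SD S3 cd dc C3 D3.
have N4 := notboth H SC SD S4 cd dc C4 D4.
clear i12 i13 i14 i23 i24 i34 i21 i31 i41 i32 i42 i43.
case: (EMg xc yc x1 y1) => g1; case: (EMg xc yc x2 y2) => g2;
case: (EMg xc yc x3 y3) => g3; case: (EMg xc yc x4 y4) => g4;
case: (EMg xd yd x1 y1) => h1; case: (EMg xd yd x2 y2) => h2;
case: (EMg xd yd x3 y3) => h3; case: (EMg xd yd x4 y4) => h4;
try (exfalso; apply: N1; split; assumption);
try (exfalso; apply: N2; split; assumption);
try (exfalso; apply: N3; split; assumption);
try (exfalso; apply: N4; split; assumption);
try (move: (C1 g1) => c1); try (move: (C2 g2) => c2);
try (move: (C3 g3) => c3); try (move: (C4 g4) => c4);
try (move: (D1 h1) => d1); try (move: (D2 h2) => d2);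
try (move: (D3 h3) => d3); try (move: (D4 h4) => d4);
clear C1 C2 C3 C4 D1 D2 D3 D4 N1 N2 N3 N4 SC SD S1 S2 S3 S4 H;
unfold gen, inc in *; lia.
Qed.

Section Sort.
Variables (S : nat -> nat -> Prop) (H : tri_ok S) (xc yc xd yd : nat).
Hypotheses (SC : S xc yc) (SD : S xd yd) (cd : xc < xd) (dc : yd < yc).

Lemma f3 a1 b1 a2 b2 a3 b3 x y :
  S a1 b1 -> S a2 b2 -> S a3 b3 -> S x y -> a1 < a2 -> a2 < a3 -> b1 < b2 -> b2 < b3 ->
  inc x y a1 b1 -> inc x y a2 b2 -> inc x y a3 b3 -> False.
Proof.
move=> S1 S2 S3 Sz l1 l2 m1 m2; rewrite /inc => i1 i2 i3.
have : x < a1 \/ (a1 < x < a2) \/ (a2 < x < a3) \/ a3 < x by lia.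
case=> [h|[/andP[h h']|[/andP[h h']|h]]].
- by apply: (no4s H SC SD cd dc Sz S1 S2 S3); lia.
- by apply: (no4s H SC SD cd dc S1 Sz S2 S3); lia.
- by apply: (no4s H SC SD cd dc S1 S2 Sz S3); lia.
- by apply: (no4s H SC SD cd dc S1 S2 S3 Sz); lia.
Qed.

Lemma f2 a1 b1 a2 b2 x y u v :
  S a1 b1 -> S a2 b2 -> S x y -> S u v -> a1 < a2 -> b1 < b2 ->
  inc x y a1 b1 -> inc x y a2 b2 -> inc u v a1 b1 -> inc u v a2 b2 -> inc x y u v -> False.
Proof.
move=> S1 S2 Sz Sw l1 m1 i1 i2 j1 j2 k.
have : x < a1 \/ (a1 < x < a2) \/ a2 < x by move: i1 i2; rewrite /inc; lia.
case=> [h|[/andP[h h']|h]].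
- by apply: (f3 Sz S1 S2 Sw _ _ _ _ (incsym k) j1 j2); move: i1 i2; rewrite /inc; lia.
- by apply: (f3 S1 Sz S2 Sw _ _ _ _ j1 (incsym k) j2); move: i1 i2; rewrite /inc; lia.
- by apply: (f3 S1 S2 Sz Sw _ _ _ _ j1 j2 (incsym k)); move: i1 i2; rewrite /inc; lia.
Qed.

Lemma f1 x1 y1 x2 y2 x3 y3 x4 y4 :
  S x1 y1 -> S x2 y2 -> S x3 y3 -> S x4 y4 ->
  inc x1 y1 x2 y2 -> inc x1 y1 x3 y3 -> inc x1 y1 x4 y4 ->
  inc x2 y2 x3 y3 -> inc x2 y2 x4 y4 -> inc x3 y3 x4 y4 -> False.
Proof.
move=> S1 S2 S3 S4 i12 i13 i14 i23 i24 i34.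
have : x1 < x2 /\ y1 < y2 \/ x2 < x1 /\ y2 < y1 by exact: i12.
case=> [[h h']|[h h']].
- exact: (f2 S1 S2 S3 S4 h h' (incsym i13) (incsym i23) (incsym i14) (incsym i24) i34).
- exact: (f2 S2 S1 S3 S4 h h' (incsym i23) (incsym i13) (incsym i24) (incsym i14) i34).
Qed.

End Sort.

Definition mirror (N : nat) (S : nat -> nat -> Prop) x y :=
  exists y0, [/\ S x y0, y0 <= N & y = N - y0].

Lemma mirror_ok N S : tri_ok S -> tri_ok (mirror N S).
Proof.
move=> H x1 x2 x3 y1 y2 y3 [z1 [S1 l1 e1]] [z2 [S2 l2 e2]] [z3 [S3 l3 e3]] a b n12 n13 n23.
have := H _ _ _ _ _ _ S1 S2 S3 a b; lia.
Qed.

Lemma no4pat S N : tri_ok S ->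
  forall xa ya xb yb xc yc xd yd x1 y1 x2 y2 x3 y3 x4 y4,
  S xa ya -> S xb yb -> xa < xb -> ya < yb ->
  S xc yc -> S xd yd -> xc < xd -> yd < yc ->
  S x1 y1 -> S x2 y2 -> S x3 y3 -> S x4 y4 ->
  ya <= N -> yb <= N -> y1 <= N -> y2 <= N -> y3 <= N -> y4 <= N ->
  gen x1 y1 x2 y2 -> gen x1 y1 x3 y3 -> gen x1 y1 x4 y4 ->
  gen x2 y2 x3 y3 -> gen x2 y2 x4 y4 -> gen x3 y3 x4 y4 -> False.
Proof.
move=> H xa ya xb yb xc yc xd yd x1 y1 x2 y2 x3 y3 x4 y4 SA SB ab ab' SC SD cd dc
  S1 S2 S3 S4 na nb n1 n2 n3 n4 g12 g13 g14 g23 g24 g34.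
have [h1 h2] := mono3 H S1 S2 S3 g12 g13 g23.
have [h3 h4] := mono3 H S1 S2 S4 g12 g14 g24.
have [h5 h6] := mono3 H S1 S3 S4 g13 g14 g34.
have [I|D] : inc x1 y1 x2 y2 \/ ~ inc x1 y1 x2 y2 by rewrite /inc; lia.
  apply: (f1 H SC SD cd dc S1 S2 S3 S4); tauto.
have M : forall x y, S x y -> y <= N -> mirror N S x (N - y).
  by move=> x y Sxy yN; exists y.
have dec : forall a b c d, gen a b c d -> ~ inc a b c d -> b <= N -> d <= N ->
  inc a (N - b) c (N - d) by move=> a b c d; rewrite /gen /inc; lia.
have dd : N - yb < N - ya by lia.
have := f1 (@mirror_ok N S H) (M _ _ SA na) (M _ _ SB nb) ab dd
          (M _ _ S1 n1) (M _ _ S2 n2) (M _ _ S3 n3) (M _ _ S4 n4).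
apply; apply: dec => //; tauto.
Qed.

Definition sel (T : Type) (a0 a1 a2 : T) (i : 'I_3) :=
  match nat_of_ord i with 0 => a0 | 1 => a1 | _ => a2 end.

Section Fin.
Variables (m n : nat) (P : 'M[bool]_(m, n)).

Definition SP x y := exists (i : 'I_m) (j : 'I_n), [/\ nat_of_ord i = x, nat_of_ord j = y & P i j].

Lemma im3 (Q : 'M[bool]_(3,3)) (a0 a1 a2 : 'I_m) (b0 b1 b2 : 'I_n) :
  a0 < a1 -> a1 < a2 -> b0 < b1 -> b1 < b2 ->
  (forall i j : 'I_3, Q i j -> P (sel a0 a1 a2 i) (sel b0 b1 b2 j)) -> interval_minor Q P.
Proof.
move=> h1 h2 h3 h4 HQ.
exists (fun k => match k with 0 => 0 | 1 => val a1 | 2 => val a2 | _ => m end).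
exists (fun k => match k with 0 => 0 | 1 => val b1 | 2 => val b2 | _ => n end).
have ha := ltn_ord a2; have hb := ltn_ord b2.
split.
  by split => //; case=> [|[|[|k]]] //= h; lia.
split.
  by split => //; case=> [|[|[|k]]] //= h; lia.
move=> i j Qij; exists (sel a0 a1 a2 i), (sel b0 b1 b2 j); split; last exact: HQ.
- by case: i {Qij} => [[|[|[|k]]] Hi] //=; rewrite /sel /=; lia.
- by case: j {Qij} => [[|[|[|k]]] Hj] //=; rewrite /sel /=; lia.
Qed.

Lemma triok : avoids Q1 P -> avoids Q2 P -> avoids Q3 P -> avoids Q4 P -> tri_ok SP.
Proof.
move=> A1 A2 A3 A4 x1 x2 x3 y1 y2 y3 [i1 [j1 [<- <- P1]]] [i2 [j2 [<- <- P2]]]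
  [i3 [j3 [<- <- P3]]] l12 l23 n12 n13 n23.
have : (j1 < j2 < j3) \/ (j3 < j2 < j1) \/ (j2 < j1 < j3) \/ (j3 < j1 < j2) \/
       (j1 < j3 < j2) \/ (j2 < j3 < j1) by lia.
case=> [/andP[a b]|[/andP[a b]|[/andP[a b]|[/andP[a b]|[/andP[a b]|/andP[a b]]]]]].
- by left.
- by right.
- exfalso; apply: A1; apply: (@im3 _ i1 i2 i3 j2 j1 j3) => //.
  by move=> [[|[|[|i]]] Hi] [[|[|[|j]]] Hj]; rewrite /Q1 /pattern mxE.
- exfalso; apply: A2; apply: (@im3 _ i1 i2 i3 j3 j1 j2) => //.
  by move=> [[|[|[|i]]] Hi] [[|[|[|j]]] Hj]; rewrite /Q2 /pattern mxE.
- exfalso; apply: A3; apply: (@im3 _ i1 i2 i3 j1 j3 j2) => //.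
  by move=> [[|[|[|i]]] Hi] [[|[|[|j]]] Hj]; rewrite /Q3 /pattern mxE.
- exfalso; apply: A4; apply: (@im3 _ i1 i2 i3 j2 j3 j1) => //.
  by move=> [[|[|[|i]]] Hi] [[|[|[|j]]] Hj]; rewrite /Q4 /pattern mxE.
Qed.

Lemma getD2 : interval_minor D2 P ->
  exists (i1 i2 : 'I_m) (j1 j2 : 'I_n), [/\ P i1 j1, P i2 j2, i1 < i2 & j1 < j2].
Proof.
case=> r [c [[r0 rk rlt] [[c0 cl clt] H]]].
have [x [y [/andP[hx1 hx2] /andP[hy1 hy2] Pxy]]] :=
  H (@Ordinal 2 0 isT) (@Ordinal 2 0 isT) ltac:(by rewrite /D2 /pattern mxE).
have [x' [y' [/andP[hx1' hx2'] /andP[hy1' hy2'] Pxy']]] :=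
  H (@Ordinal 2 1 isT) (@Ordinal 2 1 isT) ltac:(by rewrite /D2 /pattern mxE).
exists x, x', y, y'; split => //=; simpl in *; lia.
Qed.

Lemma getD2bar : interval_minor D2bar P ->
  exists (i1 i2 : 'I_m) (j1 j2 : 'I_n), [/\ P i1 j1, P i2 j2, i1 < i2 & j2 < j1].
Proof.
case=> r [c [[r0 rk rlt] [[c0 cl clt] H]]].
have [x [y [/andP[hx1 hx2] /andP[hy1 hy2] Pxy]]] :=
  H (@Ordinal 2 0 isT) (@Ordinal 2 1 isT) ltac:(by rewrite /D2bar /pattern mxE).
have [x' [y' [/andP[hx1' hx2'] /andP[hy1' hy2'] Pxy']]] :=
  H (@Ordinal 2 1 isT) (@Ordinal 2 0 isT) ltac:(by rewrite /D2bar /pattern mxE).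
exists x, x', y, y'; split => //=; simpl in *; lia.
Qed.

End Fin.

Lemma ne_val k (a b : 'I_k) : a != b -> nat_of_ord a <> nat_of_ord b.
Proof. by move=> /eqP H E; apply: H; apply: val_inj. Qed.

Unset Implicit Arguments.

Theorem proposition3p6 (m n : nat) (P : 'M[bool]_(m, n)) :
  avoids Q1 P -> avoids Q2 P -> avoids Q3 P -> avoids Q4 P ->
  avoids D2 P \/ avoids D2bar P \/ covered_by_lines P 3.
Proof.
move=> A1 A2 A3 A4.
have ok := triok A1 A2 A3 A4.
case: (classic (avoids D2 P)) => [a|na]; first by left.
case: (classic (avoids D2bar P)) => [b|nb]; first by right; left.
right; right.
have [ia [ib [ja [jb [Pa Pb lab mab]]]]] := getD2 (NNPP _ na).
have [ic [id [jc [jd [Pc Pd lcd mdc]]]]] := getD2bar (NNPP _ nb).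
apply: konig3 => i1 i2 i3 i4 j1 j2 j3 j4 P1 P2 P3 P4 ui uj.
move: ui uj; rewrite /= !inE !negb_or => /and4P[/and3P[a12 a13 a14] /andP[a23 a24] a34 _].
move=> /and4P[/and3P[b12 b13 b14] /andP[b23 b24] b34 _].
have S : forall (i : 'I_m) (j : 'I_n), P i j -> SP P i j.
  by move=> i j Pij; exists i, j.
have L : forall j : 'I_n, nat_of_ord j <= n by move=> j; apply/ltnW/ltn_ord.
apply: (@no4pat (SP P) n ok _ _ _ _ _ _ _ _ _ _ _ _ _ _ _ _
   (S _ _ Pa) (S _ _ Pb) lab mab (S _ _ Pc) (S _ _ Pd) lcd mdc
   (S _ _ P1) (S _ _ P2) (S _ _ P3) (S _ _ P4)
   (L _) (L _) (L _) (L _) (L _) (L _)); split; apply: ne_val; assumption.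
Qed.
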